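(* Let $D,D'$ be minimal abstract storage devices. Then $D\equiv D'$ if and only if there exist bijections $\phi:\mathcal{S}_D\to\mathcal{S}_{D'}$ and $\alpha:\mathcal{P}_D\to\mathcal{P}_{D'}$ such that $\pi=\alpha(\pi)\circ\phi$ for all $\pi\in\mathcal{P}_D$ (equivalently, $\pi'=\alpha^{-1}(\pi')\circ\phi^{-1}$ for all $\pi'\in\mathcal{P}_{D'}$).
   Context: An abstract storage device (ASD) is a pair $D=(\mathcal{S}_D,\mathcal{P}_D)$, $\mathcal{S}_D$ a finite set and $\mathcal{P}_D$ a finite family of partitions of $\mathcal{S}_D$. For a partition $\pi$ of $\mathcal{S}'$ and $\phi:\mathcal{S}\to\mathcal{S}'$, $\pi\circ\phi$ is the partition of $\mathcal{S}$ with $x,y$ in the same block iff $\phi(x),\phi(y)$ are in the same block of $\pi$; $\pi\preceq\rho$ means every block of $\pi$ lies in a block of $\rho$. $D\le D'$ means there exist $\phi:\mathcal{S}_D\to\mathcal{S}_{D'}$, $\alpha:\mathcal{P}_D\to\mathcal{P}_{D'}$ with $\alpha(\pi)\circ\phi\preceq\pi$ for all $\pi\in\mathcal{P}_D$; $D\equiv D'$ means $D\le D'$ and $D'\le D$. $D$ is minimal if there is no $E\equiv D$ with $|\mathcal{S}_E|<|\mathcal{S}_D|$ and no $E\equiv D$ with $|\mathcal{P}_E|<|\mathcal{P}_D|$. *)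

(* Defs.v *)
From mathcomp Require Import all_boot.
Set Implicit Arguments. Unset Strict Implicit. Unset Printing Implicit Defensive.

Record ASD := MkASD {
  st : finType;
  parts : {set {set {set st}}};
  parts_ok : forall p, p \in parts -> partition p [set: st]
}.

(* pi \o phi : x, y in the same block iff phi x, phi y in the same block of pi. *)
Definition comp_part (S S' : finType) (pi : {set {set S'}}) (phi : S -> S')
  : {set {set S}} :=
  preim_partition (fun x => pblock pi (phi x)) [set: S].

Definition refines (S : finType) (pi rho : {set {set S}}) : Prop :=
  forall B, B \in pi -> exists2 C, C \in rho & B \subset C.

Definition asd_le (D D' : ASD) : Prop :=
  exists (phi : st D -> st D') (alpha : {set {set st D}} -> {set {set st D'}}),
    forall pi, pi \in parts D ->
      alpha pi \in parts D' /\ refines (comp_part (alpha pi) phi) pi.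

Definition asd_equiv (D D' : ASD) : Prop := asd_le D D' /\ asd_le D' D.

Definition asd_minimal (D : ASD) : Prop :=
  ~ (exists E : ASD, asd_equiv E D /\ #|st E| < #|st D|) /\
  ~ (exists E : ASD, asd_equiv E D /\ #|parts E| < #|parts D|).

(* Main.v *)
Require Import Defs.
From mathcomp Require Import all_boot.
Set Implicit Arguments. Unset Strict Implicit. Unset Printing Implicit Defensive.

Definition prel (S : finType) (P : {set {set S}}) x y := y \in pblock P x.


Lemma prel_eq (S : finType) (P : {set {set S}}) x y : partition P [set: S] ->
  prel P x y = (pblock P x == pblock P y).
Proof.
case/and3P=> /eqP cP tP _; rewrite /prel eq_pblock //.
by rewrite cP inE.
Qed.

Lemma comp_partP (S S' : finType) (pi : {set {set S'}}) (phi : S -> S') :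
  partition (comp_part pi phi) [set: S].
Proof. exact: preim_partitionP. Qed.

Lemma prel_comp (S S' : finType) (pi : {set {set S'}}) (phi : S -> S') x y :
  partition pi [set: S'] ->
  prel (comp_part pi phi) x y = prel pi (phi x) (phi y).
Proof.
move=> hpi; rewrite /prel /comp_part /preim_partition.
rewrite pblock_equivalence_partition ?inE //.
  by rewrite -(prel_eq _ _ hpi).
by split=> // /eqP->.
Qed.

Lemma refinesP (S : finType) (P Q : {set {set S}}) : partition P [set: S] -> partition Q [set: S] ->
  refines P Q <-> (forall x y, prel P x y -> prel Q x y).
Proof.
move=> hP hQ; have /and3P[/eqP cP tP nP] := hP; have /and3P[/eqP cQ tQ nQ] := hQ.
have cov R x : cover R = [set: S] -> x \in cover R by move->; rewrite inE.
split.
  move=> H x y; rewrite /prel => yx.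
  have [C CQ sub] := H _ (pblock_mem (cov _ x cP)).
  have xC : x \in C by apply: (subsetP sub); rewrite mem_pblock cov.
  by rewrite (def_pblock tQ CQ xC); apply: (subsetP sub).
move=> H B BP.
have /set0Pn[x Bx] : B != set0 by apply: contraNneq nP => <-.
exists (pblock Q x); first exact: pblock_mem (cov _ x cQ).
apply/subsetP=> y yB; apply: H; by rewrite /prel (def_pblock tP BP Bx).
Qed.

Lemma part_eq (S : finType) (P Q : {set {set S}}) : partition P [set: S] -> partition Q [set: S] ->
  (forall x y, prel P x y = prel Q x y) -> P = Q.
Proof.
move=> hP hQ H.
rewrite -(equivalence_partition_pblock hP) -(equivalence_partition_pblock hQ).
rewrite /equivalence_partition; apply: eq_imset => x; apply/setP => y.
by rewrite !inE -!/(prel _ _ _) H.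
Qed.

Definition pot (S : finType) (P : {set {set S}}) := #|[set xy : S * S | prel P xy.1 xy.2]|.


Definition pset (S : finType) (P : {set {set S}}) := [set xy : S * S | prel P xy.1 xy.2].

Lemma pot_comp (S S' : finType) (pi : {set {set S'}}) (phi : S -> S') :
  partition pi [set: S'] -> bijective phi ->
  pot (comp_part pi phi) = pot pi.
Proof.
move=> hpi [g phiK gK].
rewrite /pot; pose F := fun xy : S * S => (phi xy.1, phi xy.2).
have -> : [set xy : S * S | prel (comp_part pi phi) xy.1 xy.2] =
          F @^-1: [set xy : S' * S' | prel pi xy.1 xy.2].
  by apply/setP => -[x y]; rewrite !inE prel_comp.
rewrite on_card_preimset //; apply: onW_bij.
by exists (fun xy : S' * S' => (g xy.1, g xy.2)) => -[x y]; rewrite /F /= ?phiK ?gK.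
Qed.

Lemma refl_refines (S : finType) (P : {set {set S}}) : refines P P.
Proof. by move=> B BP; exists B. Qed.

Lemma red_states (D : ASD) (f : st D -> st D) (h : {set {set st D}} -> {set {set st D}}) :
  asd_minimal D ->
  (forall pi, pi \in parts D -> h pi \in parts D /\
     forall x y, prel (h pi) (f x) (f y) -> prel pi x y) ->
  injective f.
Proof.
move=> [minS _] Hh.
pose T := {x : st D | x \in codom f}.
pose PE := [set comp_part pi (val : T -> st D) | pi in parts D].
have PEok : forall p, p \in PE -> partition p [set: T].
  by move=> p /imsetP[pi _ ->]; apply: comp_partP.
pose E := MkASD PEok.
have le1 : #|st D| <= #|st E|.
  rewrite leqNgt; apply/negP => lt; apply: minS; exists E; split => //.
  split.
    exists val, (fun s => odflt set0 [pick pi in parts D | comp_part pi val == s]).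
    move=> s /imsetP[pi0 pi0D ->].
    case: pickP => [pi /andP[piD /eqP ->]|/(_ pi0)]; last by rewrite pi0D eqxx.
    by split => //; apply: refl_refines.
  exists (fun x => exist _ (f x) (codom_f f x) : T).
  exists (fun pi => comp_part (h pi) (val : T -> st D)).
  move=> pi piD; have [hD Hr] := Hh _ piD.
  split; first by apply: imset_f.
  apply/refinesP; [exact: comp_partP | exact: parts_ok | ].
  move=> x y; rewrite prel_comp ?comp_partP // prel_comp /=; last exact: parts_ok.
  exact: Hr.
have : #|codom f| == #|st D|.
  by rewrite eqn_leq leq_image_card /= -(card_sig (fun x => x \in codom f)).
by move/image_injP => inj x y; apply: inj.
Qed.

Lemma red_parts (D : ASD) (f : st D -> st D) (h : {set {set st D}} -> {set {set st D}}) :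
  asd_minimal D ->
  (forall pi, pi \in parts D -> h pi \in parts D /\
     forall x y, prel (h pi) (f x) (f y) -> prel pi x y) ->
  {in parts D &, injective h}.
Proof.
move=> [_ minP] Hh.
have PEok : forall p, p \in h @: parts D -> partition p [set: st D].
  by move=> p /imsetP[pi piD ->]; apply: parts_ok; case: (Hh _ piD).
pose E := MkASD PEok.
have le1 : #|parts D| <= #|h @: parts D|.
  rewrite leqNgt; apply/negP => lt; apply: minP; exists E; split => //.
  split.
    exists id, id => s /= sE.
    have sD : s \in parts D by case/imsetP: sE => pi piD ->; case: (Hh _ piD).
    split => //.
    apply/refinesP; [exact: comp_partP | exact: parts_ok | ].
    by move=> x y; rewrite prel_comp //; exact: parts_ok.
  exists f, h => pi piD; have [hD Hr] := Hh _ piD.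
  split; first by apply: imset_f.
  apply/refinesP; [exact: comp_partP | exact: parts_ok | ].
  by move=> x y; rewrite prel_comp; [exact: Hr | exact: (parts_ok hD)].
apply/imset_injP; by rewrite eqn_leq leq_imset_card.
Qed.

Lemma le_rel (D D' : ASD) phi alpha :
  (forall pi, pi \in parts D -> alpha pi \in parts D' /\ refines (comp_part (alpha pi) phi) pi) ->
  forall pi, pi \in parts D -> alpha pi \in parts D' /\
     forall x y, prel (alpha pi) (phi x) (phi y) -> prel pi x y.
Proof.
move=> H pi piD; have [aD R] := H _ piD; split => // x y.
move/refinesP: R => R; rewrite -prel_comp; last exact: parts_ok aD.
apply: R; [exact: comp_partP | exact: parts_ok piD].
Qed.

Theorem proposition2 (D D' : ASD) :
  asd_minimal D -> asd_minimal D' ->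
  (asd_equiv D D' <->
   exists (phi : st D -> st D') (alpha : {set {set st D}} -> {set {set st D'}}),
     [/\ bijective phi,
         (forall pi, pi \in parts D -> alpha pi \in parts D'),
         {in parts D &, injective alpha},
         (forall pi', pi' \in parts D' -> exists2 pi, pi \in parts D & alpha pi = pi')
       & (forall pi, pi \in parts D -> pi = comp_part (alpha pi) phi)]).
Proof.
move=> minD minD'; split.
  move=> [[phi [alpha /le_rel Ha]] [psi [beta /le_rel Hb]]].
  have Hc1 : forall pi, pi \in parts D -> beta (alpha pi) \in parts D /\
     forall x y, prel (beta (alpha pi)) (psi (phi x)) (psi (phi y)) -> prel pi x y.
    move=> pi piD; have [aD Ra] := Ha _ piD; have [bD Rb] := Hb _ aD.
    by split => // x y /Rb /Ra.
  have Hc2 : forall pi, pi \in parts D' -> alpha (beta pi) \in parts D' /\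
     forall x y, prel (alpha (beta pi)) (phi (psi x)) (phi (psi y)) -> prel pi x y.
    move=> pi piD; have [aD Ra] := Hb _ piD; have [bD Rb] := Ha _ aD.
    by split => // x y /Rb /Ra.
  have i1 := red_states minD Hc1; have i2 := red_states minD' Hc2.
  have j1 := red_parts minD Hc1; have j2 := red_parts minD' Hc2.
  have iphi : injective phi by move=> x y /(congr1 psi) /i1.
  have ipsi : injective psi by move=> x y /(congr1 phi) /i2.
  have bphi : bijective phi by apply: inj_card_bij => //; apply: leq_card ipsi.
  have ialpha : {in parts D &, injective alpha}.
    by move=> p q pD qD /(congr1 beta) /j1; apply.
  have ibeta : {in parts D' &, injective beta}.
    by move=> p q pD qD /(congr1 alpha) /j2; apply.
  have sa : alpha @: parts D \subset parts D'.
    by apply/subsetP => p /imsetP[q qD ->]; case: (Ha _ qD).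
  have sb : beta @: parts D' \subset parts D.
    by apply/subsetP => p /imsetP[q qD ->]; case: (Hb _ qD).
  have ca := card_in_imset ialpha; have cb := card_in_imset ibeta.
  have ea : alpha @: parts D = parts D'.
    apply/eqP; rewrite eqEcard sa ca.
    by rewrite -cb subset_leq_card.
  have eb : beta @: parts D' = parts D.
    apply/eqP; rewrite eqEcard sb cb.
    by rewrite -ca subset_leq_card.
  have potS : forall (S S' : finType) (pi : {set {set S}}) (rho : {set {set S'}}) (f : S -> S'),
      partition rho [set: S'] ->
      (forall x y, prel rho (f x) (f y) -> prel pi x y) ->
      pset (comp_part rho f) \subset pset pi.
    move=> S S' pi rho f hr H; apply/subsetP => -[x y]; rewrite !inE prel_comp //.
    exact: H.
  have la : forall pi, pi \in parts D -> pot (alpha pi) <= pot pi.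
    move=> pi piD; have [aD Ra] := Ha _ piD.
    rewrite -(pot_comp (parts_ok aD) bphi); apply: subset_leq_card.
    exact: potS (parts_ok aD) Ra.
  have lb : forall pi, pi \in parts D' -> pot (beta pi) <= pot pi.
    move=> pi piD; have [aD Ra] := Hb _ piD.
    have bpsi : bijective psi.
      by apply: inj_card_bij => //; apply: leq_card iphi.
    rewrite -(pot_comp (parts_ok aD) bpsi); apply: subset_leq_card.
    exact: potS (parts_ok aD) Ra.
  have sum1 : \sum_(pi in parts D) pot pi <= \sum_(pi in parts D) pot (alpha pi).
    rewrite -{1}eb big_imset //= -(big_imset _ ialpha) /= ea.
    by apply: leq_sum => pi /lb.
  have eqp : forall pi, pi \in parts D -> pot (alpha pi) = pot pi.
    have : \sum_(pi in parts D) (pot pi - pot (alpha pi)) == 0.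
      by rewrite sumnB ?subn_eq0 // => pi /la.
    rewrite sum_nat_eq0 => /forallP H pi piD.
    have := H pi; rewrite piD /= subn_eq0 => le.
    by apply/eqP; rewrite eqn_leq le la.
  exists phi, alpha; split => //.
  - by move=> pi /Ha [].
  - by move=> pi'; rewrite -ea => /imsetP[pi piD ->]; exists pi.
  move=> pi piD; have [aD Ra] := Ha _ piD.
  have sub := potS _ _ _ _ _ (parts_ok aD) Ra.
  have : pset (comp_part (alpha pi) phi) == pset pi.
    rewrite eqEcard sub /= -/(pot _) -/(pot _).
    by rewrite (pot_comp (parts_ok aD) bphi) eqp.
  move/eqP => E; apply: part_eq; [exact: parts_ok piD | exact: comp_partP | ].
  move=> x y; move/setP: E => /(_ (x, y)); rewrite !inE /= => ->.
  by [].
move=> [phi [alpha [[g phiK gK] inD _ surj Heq]]].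
split.
  exists phi, alpha => pi piD; split; first exact: inD.
  by rewrite -Heq //; apply: refl_refines.
exists g, (fun pi' => odflt set0 [pick pi in parts D | alpha pi == pi']).
move=> pi' pi'D; have [pi0 pi0D e0] := surj _ pi'D.
case: pickP => [pi /andP[piD /eqP e]|/(_ pi0)]; last by rewrite pi0D e0 eqxx.
split => //=.
apply/refinesP; [exact: comp_partP | exact: parts_ok pi'D | ].
move=> x y; rewrite prel_comp; last exact: parts_ok piD.
rewrite {1}(Heq _ piD) prel_comp; last exact: parts_ok (inD _ piD).
by rewrite !gK e.
Qed.
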